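(* Let $A_1,\dots,A_k$ be $n$-dimensional boxes, and let $\mathcal{O}$ be a set of orders of them (innermost to outermost) each of which is a possible arrangement. (1) For any constant $\lambda>0$, the boxes obtained by multiplying all closed side lengths of all $A_j$ by $\lambda$ can be put in every order of $\mathcal{O}$ (with corresponding labels). (2) For any constant $c>0$, the boxes obtained by adding $c$ to all closed side lengths of all $A_j$ can be put in every order of $\mathcal{O}$.
   Context: An $n$-dimensional box $A$ has closed side lengths $a_1\le\dots\le a_n$ (positive reals). A state of $A$ is either closed or expanded along one side $i$: $a_i$ is replaced by $a_i'$ with $a_i\le a_i'\le 2a_i$, other sides unchanged (only one side can expand). The dimension vector of a state is its side lengths sorted non-decreasingly. A box in some state fits inside another box in some state if each coordinate of the outer one's dimension vector is strictly larger than the corresponding coordinate of the inner one's. An order $X_1,\dots,X_k$ (innermost to outermost) is a possible arrangement if each box can be given a state so that $X_j$ fits inside $X_{j+1}$ for all $j$; states may differ between arrangements. *)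

(* Defs.v *)
From mathcomp Require Import all_boot all_order.
From mathcomp Require Import fingroup perm.
From mathcomp Require Import all_algebra.
Set Implicit Arguments. Unset Strict Implicit. Unset Printing Implicit Defensive.
Import Order.TTheory GRing.Theory Num.Theory.
Local Open Scope ring_scope.

(* A box in dimension n: its closed side lengths, indexed by 'I_n. *)
Section Boxes.
Variable R : realFieldType.
Variable n : nat.

Definition box_pos (a : 'I_n -> R) : Prop := forall i, 0 < a i.

Definition is_state (a s : 'I_n -> R) : Prop :=
  (forall j, s j = a j) \/
  (exists i, a i <= s i <= 2 * a i /\ forall j, j != i -> s j = a j).

Definition dimvec (s : 'I_n -> R) : seq R := sort <=%R [seq s i | i <- enum 'I_n].

Definition fits (inner outer : 'I_n -> R) : bool :=
  [forall i : 'I_n, nth 0 (dimvec inner) i < nth 0 (dimvec outer) i].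

Variable k : nat.

(* The order p (X_1 = A (p 0), ..., X_k = A (p (k-1)), innermost to outermost)
   is a possible arrangement of the boxes A. *)
Definition possible_arrangement (A : 'I_k -> 'I_n -> R) (p : 'S_k) : Prop :=
  exists st : 'I_k -> 'I_n -> R,
    (forall j, is_state (A j) (st j)) /\
    sorted (fun x y => fits (st x) (st y)) [seq p i | i <- enum 'I_k].
End Boxes.

(* Main.v *)
Require Import Defs.
From mathcomp Require Import all_boot all_order.
From mathcomp Require Import fingroup perm.
From mathcomp Require Import all_algebra.
From mathcomp Require Import lra.
Import Order.TTheory GRing.Theory Num.Theory.
Local Open Scope ring_scope.

Section Aux.
Variable R : realFieldType.
Variable n : nat.
Variable f : R -> R.
Hypothesis fmono : forall x y, x < y -> f x < f y.

Lemma fle x y : x <= y -> f x <= f y.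
Proof.
rewrite le_eqVlt => /orP[/eqP->//|/fmono/ltW//].
Qed.

Lemma dimvec_map (s : 'I_n -> R) :
  dimvec (fun i => f (s i)) = map f (dimvec s).
Proof.
rewrite /dimvec.
apply: (@sorted_eq _ <=%R).
- exact: le_trans.
- exact: le_anti.
- by apply: sort_sorted => x y; exact: le_total.
- apply: homo_sorted; first exact: fle.
  by apply: sort_sorted => x y; exact: le_total.
- rewrite perm_sort.
  have -> : [seq f (s i) | i <- enum 'I_n] = map f [seq s i | i <- enum 'I_n].
    by rewrite -map_comp.
  by apply: perm_map; rewrite perm_sym perm_sort.
Qed.

Lemma size_dimvec (s : 'I_n -> R) : size (dimvec s) = n.
Proof. by rewrite /dimvec size_sort size_map size_enum_ord. Qed.

Lemma fits_map (s t : 'I_n -> R) :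
  fits s t -> fits (fun i => f (s i)) (fun i => f (t i)).
Proof.
move=> /forallP H; apply/forallP => i.
rewrite !dimvec_map.
rewrite !(nth_map 0) ?size_dimvec //.
by apply: fmono; apply: H.
Qed.

Lemma arr_map (k : nat) (A B : 'I_k -> 'I_n -> R) (p : 'S_k) :
  (forall j st, is_state (A j) st -> is_state (B j) (fun i => f (st i))) ->
  possible_arrangement A p -> possible_arrangement B p.
Proof.
move=> HS [st [Hst Hsort]].
exists (fun j i => f (st j i)); split.
- by move=> j; apply: HS.
- apply: sub_sorted Hsort => x y; exact: fits_map.
Qed.
End Aux.

Theorem proposition24 (R : realFieldType) (n k : nat) (A : 'I_k -> 'I_n -> R)
  (O : {set 'S_k}) :
  (forall j, box_pos (A j)) ->
  (forall p, p \in O -> possible_arrangement A p) ->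
  (forall lambda : R, 0 < lambda ->
     forall p, p \in O -> possible_arrangement (fun j i => lambda * A j i) p) /\
  (forall c : R, 0 < c ->
     forall p, p \in O -> possible_arrangement (fun j i => A j i + c) p).
Proof.
move=> Hpos HO; split.
- move=> l l0 p pO.
  apply: (@arr_map R n (fun x => l * x)); last exact: (HO p pO).
    by move=> x y; rewrite ltr_pM2l.
  move=> j st [H|[i [/andP[H1 H2] H3]]].
    by left => i; rewrite H.
  right; exists i; split.
    rewrite ler_pM2l // H1 /= mulrCA ler_pM2l //.
  by move=> i' /H3 ->.
- move=> c c0 p pO.
  apply: (@arr_map R n (fun x => x + c)); last exact: (HO p pO).
    by move=> x y; rewrite ltrD2r.
  move=> j st [H|[i [/andP[H1 H2] H3]]].
    by left => i; rewrite H.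
  right; exists i; split.
    rewrite lerD2r H1 /=; lra.
  by move=> i' /H3 ->.
Qed.
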